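(* Let $r_2\geq 3$ and let $c$ be an integer with $1\leq c\leq \frac{r_2-1}{2}$. Then there is no graph with parameters $(r_2,r_3)$ where $r_3=\binom{r_2}{2}-c$.
   Context: All graphs are finite, simple and undirected. The $K_3$-degree of a vertex $v$ is the number of triangles of $G$ containing $v$. A graph $G$ has parameters $(r_2,r_3)$ if every vertex has degree $r_2$ and every vertex has $K_3$-degree $r_3$. *)

(* Defs.v *)
From mathcomp Require Import all_boot.
Set Implicit Arguments. Unset Strict Implicit. Unset Printing Implicit Defensive.

Definition simple_graph (T : finType) (e : rel T) : Prop :=
  symmetric e /\ irreflexive e.

Definition nbhd (T : finType) (e : rel T) (v : T) : {set T} := [set y | e v y].
Definition degree (T : finType) (e : rel T) (v : T) : nat := #|nbhd e v|.

(* K3-degree: number of triangles containing v, i.e. number of 2-subsets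
   {y,z} of the neighbourhood of v with y adjacent to z. *)
Definition k3_degree (T : finType) (e : rel T) (v : T) : nat :=
  #|[set S : {set T} | (#|S| == 2) && (S \subset nbhd e v) &&
       [forall y in S, forall z in S, (y != z) ==> e y z]]|.

Definition has_params (T : finType) (e : rel T) (r2 r3 : nat) : Prop :=
  forall v : T, degree e v = r2 /\ k3_degree e v = r3.

(* Main.v *)
Require Import Defs.
From mathcomp Require Import all_boot.
From mathcomp Require Import zify.

Theorem theorem3p6 (r2 c : nat) :
  3 <= r2 -> 1 <= c -> 2 * c <= r2 - 1 ->
  forall (T : finType) (e : rel T), simple_graph e -> 0 < #|T| ->
    ~ has_params e r2 ('C(r2, 2) - c).
Proof.
move=> h3 hc1 h2c T e [esym eirr] hT hp.
have deg u : #|nbhd e u| = r2 by case: (hp u).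
have k3 u : k3_degree e u = 'C(r2,2) - c by case: (hp u).
pose cN u := u |: nbhd e u.
have inN u x : (x \in nbhd e u) = e u x by rewrite inE.
have incN u x : (x \in cN u) = (x == u) || e u x by rewrite !inE.
have cNsym u x : (x \in cN u) = (u \in cN x) by rewrite !incN eq_sym esym.
have cardcN u : #|cN u| = r2.+1 by rewrite cardsU1 inN eirr deg.
pose tw u := [set x | cN x == cN u].
have twE u x : (x \in tw u) = (cN x == cN u) by rewrite inE.
have twu u : u \in tw u by rewrite twE.
have twsub u a : a \in cN u -> tw a \subset cN u.
  move=> au; apply/subsetP=> y; rewrite twE => /eqP hy.
  by rewrite cNsym hy -cNsym.
have twdisj a b z : z \in cN a -> z \notin cN b -> [disjoint tw a & tw b].
  move=> za zb; rewrite -setI_eq0; apply/eqP/setP=> y; rewrite !inE.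
  apply/negP=> /andP[/eqP ha /eqP hb]; move: za zb.
  by rewrite -ha hb => ->.
have F4 u w : w \in nbhd e u -> w \notin tw u ->
    exists2 x, x \in nbhd e u & (x != w) && ~~ e w x.
  move=> wN wT.
  case: (boolP [exists x in nbhd e u, (x != w) && ~~ e w x]).
    by move=> /existsP[x /andP[xN hx]]; exists x.
  move=> H; exfalso; move/negP: wT; apply.
  rewrite twE eq_sym eqEcard !cardcN leqnn andbT.
  apply/subsetP=> x; rewrite incN => /orP[/eqP->|hux]; rewrite incN.
    by rewrite esym -inN wN orbT.
  case: eqP => [//|/eqP xw /=].
  by move/existsPn: H => /(_ x); rewrite inN hux xw /= negbK.
pose M u w := [set x in nbhd e u | (x != w) && ~~ e w x].
have F5 u w x : w \in nbhd e u -> x \in M u w -> tw x \subset M u w.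
  move=> wN; rewrite inE => /andP[xN /andP[xw nwx]].
  apply/subsetP=> y; rewrite twE => /eqP hy.
  have wy : w \notin cN y by rewrite hy incN negb_or eq_sym xw esym.
  have uy : u \in cN y by rewrite hy incN esym -inN xN orbT.
  rewrite inE; move: uy; rewrite incN => /orP[/eqP yu|eyu].
    by move: wy; rewrite -yu incN -inN wN orbT.
  rewrite inN esym eyu /=; apply/andP; split.
    by apply/negP=> /eqP yw; move: wy; rewrite -yw incN eqxx.
  by apply/negP=> ewy; move: wy; rewrite incN esym ewy orbT.
have binge : r2 - 1 <= 'C(r2, 2).
  clear -h3; case: r2 h3 => // n _; rewrite binS bin1; lia.
pose D u := [set S : {set T} | S \subset nbhd e u & #|S| == 2].
pose K u := [set S : {set T} | (#|S| == 2) && (S \subset nbhd e u) &&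
       [forall y in S, forall z in S, (y != z) ==> e y z]].
have KD u : K u \subset D u.
  by apply/subsetP=> S; rewrite !inE => /andP[/andP[-> ->] _].
have cardF u : #|D u :\: K u| = c.
  rewrite cardsD (setIidPr (KD u)) cards_draws deg.
  have : #|K u| = 'C(r2,2) - c by exact: (k3 u).
  lia.
have pairex u : exists w x, [/\ w \in nbhd e u, x \in nbhd e u, w != x & ~~ e w x].
  have : 0 < #|D u :\: K u| by rewrite cardF.
  case/card_gt0P => S; rewrite /D /K !inE => /andP[Hn /andP[SN S2]].
  move: Hn; rewrite SN S2 /= => /forallPn [y]; rewrite negb_imply.
  move=> /andP[yS /forallPn [z]]; rewrite negb_imply => /andP[zS].
  rewrite negb_imply => /andP[yz nyz].
  by exists y, z; split => //; apply: (subsetP SN).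
have sumM u : \sum_(w in nbhd e u) #|M u w| <= 2 * c.
  pose F := D u :\: K u.
  have cardF' : #|F| = c by apply: cardF.
  have cnt w : #|[set S in F | w \in S]| = \sum_(S in F) (w \in S : nat).
    rewrite -sum1_card [LHS]big_mkcond [RHS]big_mkcond /=.
    apply: eq_bigr => S _; rewrite !inE.
    by case: (w \in S); rewrite ?andbT ?andbF; case: ifP.
  have Fsz S : S \in F -> \sum_(w in nbhd e u) (w \in S : nat) = 2.
    rewrite !inE => /andP[_ /andP[SN /eqP S2]].
    rewrite -S2 -sum1_card [LHS]big_mkcond [RHS]big_mkcond /=.
    apply: eq_bigr => w _.
    case wS: (w \in S); last by case: (w \in nbhd e u).
    by rewrite (subsetP SN).
  apply: (@leq_trans (\sum_(w in nbhd e u) #|[set S in F | w \in S]|)).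
    apply: leq_sum => w wN.
    rewrite -(@card_in_imset _ _ (fun x => [set w; x])).
      apply: subset_leq_card; apply/subsetP=> S /imsetP[x].
      rewrite /M inE => /andP[xN /andP[xw nwx]] ->.
      rewrite inE; apply/andP; split; last by rewrite !inE eqxx.
      have wx : w != x by rewrite eq_sym.
      have sub : [set w; x] \subset nbhd e u.
        by apply/subsetP=> y; rewrite !inE => /orP[]/eqP->; rewrite -?inN.
      rewrite /F /D /K !inE cards2 wx sub /= andbT.
      apply/negP=> /forallP /(_ w); rewrite !inE eqxx /= => /forallP /(_ x).
      by rewrite !inE eqxx orbT wx /= (negbTE nwx).
    move=> x y; rewrite /M !inE => /andP[_ /andP[xw _]] /andP[_ /andP[yw _]] hxy.
    have : x \in [set w; x] by rewrite !inE eqxx orbT.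
    by rewrite hxy !inE (negbTE xw) /= => /eqP.
  under eq_bigr do rewrite cnt.
  rewrite exchange_big /=.
  rewrite (eq_bigr (fun _ => 2)); last by move=> S SF; rewrite Fsz.
  by rewrite sum_nat_const cardF' mulnC.
have Pcard u : #|nbhd e u :\: tw u| = r2.+1 - #|tw u|.
  have -> : nbhd e u :\: tw u = cN u :\: tw u.
    apply/setP=> x; rewrite !inE.
    by case: (@eqP _ x u) => [->|_] /=; rewrite ?eqxx.
  by rewrite cardsD (setIidPr (twsub u u _)) ?cardcN // incN eqxx.
have twle u : #|tw u| <= r2.+1.
  by rewrite -(cardcN u); apply: subset_leq_card; apply: twsub; rewrite incN eqxx.
have bound u k : (forall w, w \in nbhd e u :\: tw u -> k <= #|M u w|) ->
    #|nbhd e u :\: tw u| * k <= 2 * c.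
  move=> H; apply: leq_trans (sumM u).
  rewrite (big_setID (tw u)) /=; apply: leq_trans (leq_addl _ _).
  rewrite -sum_nat_const; exact: leq_sum.
have Mlow u w : w \in nbhd e u :\: tw u -> exists x, tw x \subset M u w.
  rewrite inE => /andP[wT wN]; have [x xN hx] := F4 u w wN wT.
  by exists x; apply: F5 => //; rewrite /M inE xN hx.
have s2 u : 2 <= #|tw u|.
  have H : forall w, w \in nbhd e u :\: tw u -> 1 <= #|M u w|.
    move=> w /Mlow [x /subset_leq_card]; apply: leq_trans.
    by rewrite card_gt0; apply/set0Pn; exists x; exact: twu.
  have := bound u 1 H; rewrite Pcard muln1.
  have := twle u; lia.
have sB u : r2.+1 <= #|tw u| + c.
  have H : forall w, w \in nbhd e u :\: tw u -> 2 <= #|M u w|.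
    move=> w /Mlow [x /subset_leq_card]; apply: leq_trans; exact: s2.
  have := bound u 2 H; rewrite Pcard.
  have := twle u; lia.
case/card_gt0P: hT => u _.
case: (pairex u) => w [x [wN xN wx nwx]].
have xnw : x \notin cN w by rewrite incN negb_or eq_sym wx nwx.
have wnx : w \notin cN x by rewrite incN negb_or wx esym nwx.
have xu : x \in cN u by rewrite incN -inN xN orbT.
have wu : w \in cN u by rewrite incN -inN wN orbT.
have d1 := twdisj u w x xu xnw.
have d2 := twdisj u x w wu wnx.
have ww : w \in cN w by rewrite incN eqxx.
have d3 := twdisj w x w ww wnx.
have dUx : [disjoint tw u :|: tw w & tw x].
  move: d2 d3; rewrite -!setI_eq0 setIUl => /eqP-> /eqP->.
  by rewrite setU0.
have c1 : #|tw u :|: tw w| = #|tw u| + #|tw w|.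
  by have := leq_card_setU (tw u) (tw w); case=> _; rewrite d1 => /eqP.
have c2 : #|tw u :|: tw w :|: tw x| = #|tw u :|: tw w| + #|tw x|.
  by have := leq_card_setU (tw u :|: tw w) (tw x); case=> _; rewrite dUx => /eqP.
have sub : tw u :|: tw w :|: tw x \subset cN u.
  by rewrite !subUset !twsub // incN eqxx.
have := subset_leq_card sub; rewrite c2 c1 cardcN.
have := sB u; have := sB w; have := sB x.
move: (#|tw u|) (#|tw w|) (#|tw x|) => a b d.
clear -h2c; lia.
Qed.
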